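(* Let $a,b\in\mathbb{R}$ with $a<b$, let $n\in\mathbb{N}$ with $n\ge2$, let $q>1$, $p=\frac{q}{q-1}$, and assume $2q-p-1>0$. Then $$\left|A(a^n,b^n)-L_n^n(a,b)\right|\le \frac{n(n-1)(b-a)^2}{2}\left(\frac{q-1}{2q-p-1}\right)^{\frac{q-1}{q}}\bigl(\beta(p+1,q+1)\bigr)^{\frac1q}\left(\max\{|a|^{(n-2)q},|b|^{(n-2)q}\}\right)^{\frac1q}.$$
   Context: $A(x,y)=\frac{x+y}{2}$ (arithmetic mean). For $a\ne b$ and $n\in\mathbb{Z}\setminus\{-1,0\}$, $L_n(a,b)=\left[\frac{b^{n+1}-a^{n+1}}{(n+1)(b-a)}\right]^{1/n}$ (generalized logarithmic mean), so $L_n^n(a,b)=\frac{b^{n+1}-a^{n+1}}{(n+1)(b-a)}$. $\beta(x,y)=\int_0^1 t^{x-1}(1-t)^{y-1}\,dt$. *)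

(* Defs.v *)
From Stdlib Require Import Reals Lra.
Open Scope R_scope.

(* Real power x^y for x >= 0, with the conventions 0^0 = 1 and 0^y = 0 for y <> 0
   (Stdlib's Rpower is only meaningful for positive base). *)
Definition rpow (x y : R) : R :=
  if Req_EM_T x 0 then (if Req_EM_T y 0 then 1 else 0) else Rpower x y.

Definition Amean (x y : R) : R := (x + y) / 2.

Definition Lnn (n : nat) (a b : R) : R :=
  (b ^ (n + 1) - a ^ (n + 1)) / ((INR n + 1) * (b - a)).

Definition beta_integrand (x y : R) (t : R) : R :=
  rpow t (x - 1) * rpow (1 - t) (y - 1).

Definition is_beta (x y B : R) : Prop :=
  exists pr : Riemann_integrable (beta_integrand x y) 0 1, RiemannInt pr = B.

(* Main.v *)
Require Import Defs.
From Stdlib Require Import Reals Lra Lia.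
From Coquelicot Require Import Coquelicot.
Open Scope R_scope.

Lemma mono (H H' : R->R) a x : a <= x ->
  (forall c, a<=c<=x -> derivable_pt_lim H c (H' c)) ->
  (forall c, a<=c<=x -> 0 <= H' c) -> H a <= H x.
Proof.
intros hx hd hp. destruct hx as [hx|hx].
- destruct (MVT_cor2 H H' a x hx hd) as [c [e hc]].
  assert (0 <= H' c * (x - a)). { apply Rmult_le_pos. apply hp; lra. lra. }
  lra.
- subst; lra.
Qed.

Definition G (a : R) (m : nat) x := (a^(m+2) + x^(m+2))/2*(x-a) - (x^(m+2+1) - a^(m+2+1))/(INR (m+2) + 1).
Definition G1 (a : R) (m : nat) x := (INR m+2)*x^(m+1)*(x-a)/2 + (a^(m+2) - x^(m+2))/2.
Definition G2 (a : R) (m : nat) x := (INR m+2)*(INR m+1)*x^m*(x-a)/2.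

Lemma dG a m x : derivable_pt_lim (G a m) x (G1 a m x).
Proof.
apply is_derive_Reals. unfold G, G1. auto_derive; auto.
replace (Init.Nat.pred (m+2)) with (m+1)%nat by lia.
replace (Init.Nat.pred (m+2+1)) with (m+2)%nat by lia.
replace (INR (m+2+1)) with (INR m + 3) by (rewrite !plus_INR; simpl; ring).
replace (INR (m+2)) with (INR m + 2) by (rewrite !plus_INR; simpl; ring).
replace (m+2)%nat with (S (m+1)) by lia. rewrite <- !tech_pow_Rmult.
field. pose proof (pos_INR m). lra.
Qed.

Lemma dG1 a m x : derivable_pt_lim (G1 a m) x (G2 a m x).
Proof.
apply is_derive_Reals. unfold G1, G2. auto_derive; auto.
replace (Init.Nat.pred (m+2)) with (m+1)%nat by lia.
replace (Init.Nat.pred (m+1)) with m by lia.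
replace (INR (m+1)) with (INR m + 1) by (rewrite !plus_INR; simpl; ring).
replace (INR (m+2)) with (INR m + 2) by (rewrite !plus_INR; simpl; ring).
field.
Qed.

Lemma dcomb (P F: R->R) P' F' x s : derivable_pt_lim P x P' -> derivable_pt_lim F x F' ->
  derivable_pt_lim (fun y => P y - s*F y) x (P' - s*F').
Proof.
intros h1 h2. exact (derivable_pt_lim_minus _ _ _ _ _ h1 (derivable_pt_lim_scal _ s _ _ h2)).
Qed.

Lemma bnd (F F' P P' : R->R) a b : F a = 0 -> P a = 0 ->
  (forall x, derivable_pt_lim F x (F' x)) -> (forall x, derivable_pt_lim P x (P' x)) ->
  (forall x, a<=x<=b -> Rabs (F' x) <= P' x) -> forall x, a<=x<=b -> Rabs (F x) <= P x.
Proof.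
intros F0 P0 dF dP hb x hx.
assert (forall s, (s = 1 \/ s = -1) -> s * F x <= P x).
{ intros s hs.
  assert (P a - s * F a <= P x - s * F x).
  { apply (mono (fun y => P y - s*F y) (fun y => P' y - s * F' y)). lra.
    intros c hc. apply dcomb; auto.
    intros c hc. specialize (hb c ltac:(lra)). revert hb. unfold Rabs.
    destruct (Rcase_abs (F' c)); destruct hs; subst; intros; nra. }
  rewrite F0, P0 in H. lra. }
pose proof (H 1 (or_introl eq_refl)). pose proof (H (-1) (or_intror eq_refl)).
unfold Rabs; destruct (Rcase_abs (F x)); lra.
Qed.

Lemma absmax a b x : a <= x <= b -> Rabs x <= Rmax (Rabs a) (Rabs b).
Proof. intros. unfold Rmax, Rabs. repeat destruct Rcase_abs; destruct Rle_dec; lra. Qed.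

Lemma trap a b m : a < b ->
  Rabs ((a^(m+2) + b^(m+2))/2 - (b ^ (m+2 + 1) - a ^ (m+2 + 1)) / ((INR (m+2) + 1) * (b - a)))
  <= (INR m+2)*(INR m+1)*(b-a)^2/12 * (Rmax (Rabs a) (Rabs b))^m.
Proof.
intros hab.
set (K := (Rmax (Rabs a) (Rabs b))^m).
set (c := (INR m+2)*(INR m+1)*K).
assert (hK : 0 <= K). { unfold K. apply pow_le. unfold Rmax; destruct Rle_dec; apply Rabs_pos. }
assert (hc : 0 <= c). { unfold c. pose proof (pos_INR m). apply Rmult_le_pos; nra. }
assert (h2 : forall x, a <= x <= b -> Rabs (G2 a m x) <= c*(x-a)/2).
{ intros x hx. unfold G2, c. pose proof (pos_INR m).
  assert (Rabs (x^m) <= K). { rewrite <- RPow_abs. apply pow_incr. split. apply Rabs_pos. apply absmax; auto. }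
  replace ((INR m + 2) * (INR m + 1) * x ^ m * (x - a) / 2) with (((INR m + 2) * (INR m + 1) * (x - a) / 2) * x^m) by field.
  rewrite Rabs_mult. rewrite (Rabs_right ((INR m + 2) * (INR m + 1) * (x - a) / 2)).
  replace ((INR m + 2) * (INR m + 1) * K * (x - a) / 2) with (((INR m + 2) * (INR m + 1) * (x - a) / 2) * K) by field.
  apply Rmult_le_compat_l. apply Rle_ge in hK. nra. auto.
  apply Rle_ge. nra. }
assert (h1 : forall x, a <= x <= b -> Rabs (G1 a m x) <= c*(x-a)^2/4).
{ apply (bnd (G1 a m) (G2 a m) (fun x => c*(x-a)^2/4) (fun x => c*(x-a)/2) a b).
  unfold G1; field. field. apply dG1.
  intro x. apply is_derive_Reals. auto_derive; auto. field.
  exact h2. }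
assert (h0 : Rabs (G a m b) <= c*(b-a)^3/12).
{ apply (bnd (G a m) (G1 a m) (fun x => c*(x-a)^3/12) (fun x => c*(x-a)^2/4) a b).
  unfold G, Rdiv; ring. field. apply dG.
  intro x. apply is_derive_Reals. auto_derive; auto. field.
  exact h1. lra. }
assert (e : G a m b = (b-a) * ((a^(m+2) + b^(m+2))/2 - (b ^ (m+2 + 1) - a ^ (m+2 + 1)) / ((INR (m+2) + 1) * (b - a)))).
{ unfold G. field. pose proof (pos_INR (m+2)). lra. }
rewrite e, Rabs_mult, Rabs_right in h0 by lra.
replace (c * (b - a) ^ 3 / 12) with ((b-a) * (c*(b-a)^2/12)) in h0 by field.
apply Rmult_le_reg_l with (b-a). lra. unfold c in h0. lra.
Qed.

Lemma amgm th u v : 0 <= th <= 1 -> exp (th*u + (1-th)*v) <= th * exp u + (1-th) * exp v.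
Proof.
intros h. set (m := th*u + (1-th)*v).
assert (e1 : exp u = exp m * exp (u - m)) by (rewrite <- exp_plus; f_equal; ring).
assert (e2 : exp v = exp m * exp (v - m)) by (rewrite <- exp_plus; f_equal; ring).
pose proof (exp_ineq1_le (u-m)). pose proof (exp_ineq1_le (v-m)). pose proof (exp_pos m).
rewrite e1, e2.
assert (th * (exp m * (1 + (u-m))) + (1-th)*(exp m * (1 + (v - m))) = exp m).
{ unfold m. ring. }
assert (exp m * (1 + (u-m)) <= exp m * exp (u-m)) by (apply Rmult_le_compat_l; lra).
assert (exp m * (1 + (v-m)) <= exp m * exp (v-m)) by (apply Rmult_le_compat_l; lra).
nra.
Qed.

Lemma young q p al s t : 1 < q -> p = q/(q-1) -> al = (2*q-p-1)/(q-1) - 1 -> 0 < s -> 0 < t < 1 ->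
  t*(1-t) <= (s/p) * Rpower t al + Rpower t p * Rpower (1-t) q / (q * Rpower s (q-1)).
Proof.
intros hq hp hal hs ht.
assert (hp1 : 1 < p). { subst p. apply (Rmult_lt_reg_r (q-1)). lra. field_simplify; lra. }
pose (th := 1/p).
set (u := ln s + al * ln t). set (v := p * ln t + q * ln (1-t) - (q-1) * ln s).
assert (e : th * u + (1-th) * v = ln t + ln (1-t)).
{ unfold th, u, v. subst al p. field. split; lra. }
pose proof (amgm th u v) as H. rewrite e, exp_plus, !exp_ln in H by lra.
assert (eu : exp u = s * Rpower t al).
{ unfold u, Rpower. rewrite exp_plus, exp_ln; auto. }
assert (ev : exp v = Rpower t p * Rpower (1-t) q / Rpower s (q-1)).
{ unfold v, Rpower. replace (p * ln t + q * ln (1 - t) - (q - 1) * ln s) with ((p * ln t + q * ln (1 - t)) + - ((q - 1) * ln s)) by ring.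
  rewrite !exp_plus, exp_Ropp. reflexivity. }
rewrite eu, ev in H.
assert (1 - th = 1/q). { unfold th. subst p. field. lra. }
rewrite H0 in H. unfold th in H.
replace (s / p * Rpower t al + Rpower t p * Rpower (1 - t) q / (q * Rpower s (q - 1)))
  with (1 / p * (s * Rpower t al) + 1 / q * (Rpower t p * Rpower (1 - t) q / Rpower s (q - 1))).
apply H. unfold th. split. apply Rlt_le. unfold Rdiv; rewrite Rmult_1_l. apply Rinv_0_lt_compat; lra.
apply (Rmult_le_reg_r p). lra. field_simplify; lra.
field. pose proof (exp_pos ((q-1) * ln s)). unfold Rpower. lra.
Qed.

Lemma g_eq p q t : 0 < t < 1 -> beta_integrand (p+1) (q+1) t = Rpower t p * Rpower (1-t) q.
Proof.
intros ht. unfold beta_integrand, rpow.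
destruct (Req_EM_T t 0). lra. destruct (Req_EM_T (1-t) 0). lra.
replace (p+1-1) with p by ring. replace (q+1-1) with q by ring. reflexivity.
Qed.

Lemma beta_eps q p B s eps : 1 < q -> p = q/(q-1) -> 2*q-p-1 > 0 -> is_beta (p+1) (q+1) B -> 0 < s -> 0 < eps < 1 ->
  let K := (2*q-p-1)/(q-1) in let D := q * Rpower s (q-1) in
  B >= D * (1/6 - s/(p*K)) - D * eps^2/2.
Proof.
intros hq hp h2 [pr hB] hs he K D.
assert (hp1 : 1 < p). { subst p. apply (Rmult_lt_reg_r (q-1)). lra. field_simplify; lra. }
assert (hK : 0 < K). { unfold K. apply Rdiv_lt_0_compat; lra. }
assert (hD : 0 < D). { unfold D. pose proof (exp_pos ((q-1) * ln s)). unfold Rpower. nra. }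
set (A := s/p). assert (hA : 0 < A) by (unfold A; apply Rdiv_lt_0_compat; lra).
set (g := beta_integrand (p+1) (q+1)).
assert (hex : ex_RInt g 0 1) by (exact (ex_RInt_Reals_1 _ _ _ pr)).
assert (hI : RInt g 0 1 = B) by (rewrite (RInt_Reals g 0 1 pr); exact hB).
assert (hex0 : ex_RInt g 0 eps) by (apply (ex_RInt_Chasles_1 g 0 eps 1); [lra|exact hex]).
assert (hex1 : ex_RInt g eps 1) by (apply (ex_RInt_Chasles_2 g 0 eps 1); [lra|exact hex]).
assert (hsplit : RInt g 0 eps + RInt g eps 1 = B).
{ rewrite <- hI. rewrite <- (RInt_Chasles g 0 eps 1); auto. }
assert (hpos : 0 <= RInt g 0 eps).
{ apply RInt_ge_0; auto. lra. intros x hx. unfold g. rewrite g_eq by lra.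
  unfold Rpower. pose proof (exp_pos (p * ln x)). pose proof (exp_pos (q * ln (1-x))). nra. }
pose (w := fun t => D * (t - t^2 - A * Rpower t (K-1))).
pose (W := fun t => D * (t^2/2 - t^3/3 - A * Rpower t K / K)).
assert (hW : is_RInt w eps 1 (W 1 - W eps)).
{ apply (is_RInt_derive W w). 
  - rewrite Rmin_left, Rmax_right by lra. intros x hx. unfold W, w, Rpower.
    auto_derive. lra.
    replace (K * ln x) with ((K-1) * ln x + ln x) by ring. rewrite exp_plus, exp_ln by lra.
    field. split; lra.
  - rewrite Rmin_left, Rmax_right by lra. intros x hx. apply (@ex_derive_continuous R_AbsRing R_NormedModule).
    unfold w, Rpower. auto_derive. lra. }
assert (hexw : ex_RInt w eps 1) by (exists (W 1 - W eps); exact hW).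
assert (hle : RInt w eps 1 <= RInt g eps 1).
{ apply RInt_le; auto. lra. intros x hx. unfold g, w. rewrite g_eq by lra.
  pose proof (young q p (K-1) s x hq hp ltac:(unfold K; ring) hs ltac:(lra)).
  fold A in H. unfold D.
  assert (0 < q * Rpower s (q-1)) by exact hD.
  assert (0 < Rpower s (q-1)) by (unfold Rpower; apply exp_pos).
  replace (Rpower x p * Rpower (1 - x) q) with ((q * Rpower s (q - 1)) * (Rpower x p * Rpower (1 - x) q / (q * Rpower s (q - 1)))) by (field; split; lra).
  apply Rmult_le_compat_l. lra. nra. }
rewrite (is_RInt_unique w eps 1 _ hW) in hle.
assert (W 1 = D * (1/6 - s/(p*K))).
{ unfold W. replace (Rpower 1 K) with 1. unfold A. field. split; lra.
  unfold Rpower. rewrite ln_1, Rmult_0_r, exp_0. reflexivity. }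
assert (W eps <= D * eps^2/2).
{ unfold W. pose proof (exp_pos (K * ln eps)). unfold Rpower.
  assert (0 < A * exp (K * ln eps) / K) by (apply Rdiv_lt_0_compat; nra).
  assert (0 < eps^3) by (apply pow_lt; lra). nra. }
change (minus (W 1) (W eps)) with (W 1 - W eps) in hle. lra.
Qed.

Lemma beta_lb q p B : 1 < q -> p = q/(q-1) -> 2*q-p-1 > 0 -> is_beta (p+1) (q+1) B ->
  B >= Rpower ((2*q-p-1)/(q-1)/6) (q-1) / 6.
Proof.
intros hq hp h2 hb.
set (K := (2*q-p-1)/(q-1)).
assert (hK : 0 < K). { unfold K. apply Rdiv_lt_0_compat; lra. }
assert (hp1 : 1 < p). { subst p. apply (Rmult_lt_reg_r (q-1)). lra. field_simplify; lra. }
set (s := K/6). assert (hs : 0 < s) by (unfold s; lra).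
set (D := q * Rpower s (q-1)).
assert (hR : 0 < Rpower s (q-1)) by (unfold Rpower; apply exp_pos).
assert (hD : 0 < D) by (unfold D; nra).
assert (hX : D * (1/6 - s/(p*K)) = Rpower s (q-1) / 6).
{ unfold D, s. subst p. field. repeat split; lra. }
rewrite <- hX.
pose proof (fun eps he => beta_eps q p B s eps hq hp h2 hb hs he) as H. simpl in H. fold K D in H.
destruct (Rge_or_gt B (D * (1/6 - s/(p*K)))) as [|hlt]; auto.
exfalso. set (X := D * (1/6 - s/(p*K))) in *.
set (dl := X - B). assert (hdl : 0 < dl) by (unfold dl; lra).
set (eps := Rmin (1/2) (dl/(D+1))).
assert (he1 : 0 < eps). { unfold eps, Rmin. destruct Rle_dec. lra. apply Rdiv_lt_0_compat; lra. }
assert (he2 : eps <= 1/2) by (unfold eps; apply Rmin_l).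
assert (he3 : eps <= dl/(D+1)) by (unfold eps; apply Rmin_r).
specialize (H eps ltac:(lra)).
assert (eps * (D+1) <= dl). { apply (Rmult_le_reg_r (/(D+1))). apply Rinv_0_lt_compat; lra.
  replace (eps * (D+1) * /(D+1)) with eps by (field; lra). exact he3. }
assert (D * eps^2/2 < dl) by nra.
unfold dl in *. lra.
Qed.

Lemma const_lb q p B : 1 < q -> p = q/(q-1) -> 2*q-p-1 > 0 -> is_beta (p+1) (q+1) B ->
  1/6 <= rpow ((q - 1) / (2 * q - p - 1)) ((q - 1) / q) * rpow B (1 / q).
Proof.
intros hq hp h2 hb.
pose proof (beta_lb q p B hq hp h2 hb) as H.
set (K := (2*q-p-1)/(q-1)) in *.
assert (hK : 0 < K). { unfold K. apply Rdiv_lt_0_compat; lra. }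
set (X := Rpower (K/6) (q-1) / 6) in *.
assert (hX : 0 < X). { unfold X, Rpower. pose proof (exp_pos ((q-1) * ln (K/6))). lra. }
assert (e1 : rpow ((q - 1) / (2 * q - p - 1)) ((q - 1) / q) = Rpower (/K) ((q-1)/q)).
{ unfold rpow. destruct Req_EM_T as [e|]. exfalso. pose proof (Rdiv_lt_0_compat (q-1) (2*q-p-1) ltac:(lra) ltac:(lra)). lra.
  f_equal. unfold K. field. lra. }
assert (e2 : rpow B (1/q) = Rpower B (1/q)).
{ unfold rpow. destruct Req_EM_T. lra. reflexivity. }
rewrite e1, e2.
assert (Rpower X (1/q) <= Rpower B (1/q)).
{ apply Rle_Rpower_l. apply Rlt_le, Rdiv_lt_0_compat; lra. lra. }
assert (0 < Rpower (/K) ((q-1)/q)) by (unfold Rpower; apply exp_pos).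
assert (Rpower (/ K) ((q - 1) / q) * Rpower X (1 / q) = 1/6).
{ unfold X. unfold Rpower at 1 2. rewrite <- exp_plus.
  assert (hR : 0 < Rpower (K / 6) (q - 1)) by (unfold Rpower; apply exp_pos).
  rewrite ln_div, ln_Rinv by lra.
  unfold Rpower. rewrite ln_exp. rewrite ln_div by lra.
  replace ((q - 1) / q * - ln K + 1 / q * ((q - 1) * (ln K - ln 6) - ln 6)) with (- ln 6) by (field; lra).
  rewrite exp_Ropp, exp_ln by lra. field. }
nra.
Qed.

Lemma rpow_nonneg x y : 0 <= x -> 0 <= rpow x y.
Proof. intros. unfold rpow. destruct Req_EM_T. destruct Req_EM_T; lra. unfold Rpower. left; apply exp_pos. Qed.

Lemma rp1 x m q : 0 <= x -> 0 < q -> rpow x (INR m * q) = rpow (x^m) q.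
Proof.
intros hx hq. destruct hx as [hx|hx].
- unfold rpow. destruct (Req_EM_T x 0). lra.
  destruct (Req_EM_T (x^m) 0) as [e|]. exfalso. pose proof (pow_lt x m hx). lra.
  rewrite <- Rpower_mult, Rpower_pow by auto. reflexivity.
- subst x. destruct m as [|m].
  + simpl. unfold rpow. rewrite Rmult_0_l. destruct (Req_EM_T 0 0); [|lra].
    destruct (Req_EM_T 0 0); [|lra]. destruct (Req_EM_T 1 0). lra.
    unfold Rpower. rewrite ln_1, Rmult_0_r, exp_0. reflexivity.
  + rewrite pow_ne_zero by lia. unfold rpow. destruct (Req_EM_T 0 0); [|lra].
    destruct (Req_EM_T (INR (S m) * q) 0) as [e0|]. exfalso. rewrite S_INR in e0. pose proof (pos_INR m). nra.
    destruct (Req_EM_T q 0). lra. reflexivity.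
Qed.

Lemma rpow_mono u v q : 0 <= u <= v -> 0 < q -> rpow u q <= rpow v q.
Proof.
intros h hq. destruct (Req_EM_T u 0) as [e|ne].
- subst. replace (rpow 0 q) with 0. apply rpow_nonneg; lra.
  unfold rpow. destruct Req_EM_T; [|lra]. destruct Req_EM_T; lra.
- unfold rpow. destruct (Req_EM_T u 0); [lra|]. destruct (Req_EM_T v 0); [lra|].
  apply Rle_Rpower_l; lra.
Qed.

Lemma rp2 u v q : 0 <= u -> 0 <= v -> 0 < q -> Rmax (rpow u q) (rpow v q) = rpow (Rmax u v) q.
Proof.
intros hu hv hq. destruct (Rle_dec u v).
- rewrite (Rmax_right u v) by lra. apply Rmax_right. apply rpow_mono; lra.
- rewrite (Rmax_left u v) by lra. apply Rmax_left. apply rpow_mono; lra.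
Qed.

Lemma rp3 w q : 0 <= w -> 0 < q -> rpow (rpow w q) (1/q) = w.
Proof.
intros hw hq. destruct hw as [hw|hw].
- unfold rpow at 2. destruct (Req_EM_T w 0); [lra|].
  unfold rpow. destruct (Req_EM_T (Rpower w q) 0) as [hz|]. exfalso. unfold Rpower in hz. pose proof (exp_pos (q * ln w)). lra.
  rewrite Rpower_mult. replace (q * (1/q)) with 1 by (field; lra). apply Rpower_1; auto.
- subst. unfold rpow. destruct (Req_EM_T 0 0); [|lra]. destruct (Req_EM_T q 0); [lra|].
  destruct (Req_EM_T 0 0); [|lra]. destruct (Req_EM_T (1/q) 0) as [hz|]; [|reflexivity].
  exfalso. assert (0 < 1/q) by (apply Rdiv_lt_0_compat; lra). lra.
Qed.

Lemma rp4 x y m : 0 <= x -> 0 <= y -> Rmax (x^m) (y^m) = (Rmax x y)^m.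
Proof.
intros hx hy. destruct (Rle_dec x y).
- rewrite (Rmax_right x y) by lra. apply Rmax_right. apply pow_incr; lra.
- rewrite (Rmax_left x y) by lra. apply Rmax_left. apply pow_incr; lra.
Qed.

Theorem proposition5 (a b : R) (n : nat) (q p B : R) :
  a < b -> (2 <= n)%nat -> 1 < q -> p = q / (q - 1) -> 2 * q - p - 1 > 0 ->
  is_beta (p + 1) (q + 1) B ->
  Rabs (Amean (a ^ n) (b ^ n) - Lnn n a b) <=
    INR n * (INR n - 1) * (b - a) ^ 2 / 2
    * rpow ((q - 1) / (2 * q - p - 1)) ((q - 1) / q)
    * rpow B (1 / q)
    * rpow (Rmax (rpow (Rabs a) ((INR n - 2) * q)) (rpow (Rabs b) ((INR n - 2) * q))) (1 / q).
Proof.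
intros hab hn hq hp h2 hb.
pose proof (const_lb q p B hq hp h2 hb) as hC.
destruct (Nat.le_exists_sub 2 n hn) as [m [em _]]. subst n.
replace (INR (m+2) - 2) with (INR m) by (rewrite plus_INR; simpl; ring).
replace (INR (m+2) - 1) with (INR m + 1) by (rewrite plus_INR; simpl; ring).
replace (INR (m+2)) with (INR m + 2) by (rewrite plus_INR; simpl; ring).
rewrite !rp1 by (auto using Rabs_pos; lra).
rewrite rp2 by (try apply pow_le; auto using Rabs_pos; lra).
rewrite rp3.
2: { unfold Rmax; destruct Rle_dec; apply pow_le, Rabs_pos. }
2: lra.
rewrite rp4 by apply Rabs_pos.
pose proof (trap a b m hab) as T. unfold Amean, Lnn.
set (Mx := Rmax (Rabs a) (Rabs b) ^ m) in *.
assert (hM : 0 <= Mx). { unfold Mx. apply pow_le. unfold Rmax; destruct Rle_dec; apply Rabs_pos. }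
set (C1 := rpow ((q - 1) / (2 * q - p - 1)) ((q - 1) / q)) in *.
set (C2 := rpow B (1 / q)) in *.
set (c0 := (INR m + 2) * (INR m + 1) * (b - a) ^ 2) in *.
assert (hc0 : 0 <= c0). { unfold c0. pose proof (pos_INR m). pose proof (pow2_ge_0 (b-a)). apply Rmult_le_pos; nra. }
replace ((INR m + 2) * (INR m + 1) * (b - a) ^ 2 / 12 * Mx) with (c0 / 2 * (1/6) * Mx) in T by (unfold c0; field).
assert (0 <= c0/2 * Mx) by (apply Rmult_le_pos; lra).
assert (c0 / 2 * (1/6) * Mx <= c0 / 2 * C1 * C2 * Mx).
{ replace (c0 / 2 * C1 * C2 * Mx) with ((c0/2*Mx) * (C1*C2)) by ring.
  replace (c0 / 2 * (1/6) * Mx) with ((c0/2*Mx) * (1/6)) by ring.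
  apply Rmult_le_compat_l; lra. }
lra.
Qed.
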